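(* Let $\hat{\mathcal D}$ be a marked DAG over $X$, $\kappa>0$, $q\in\mathcal Q_{\mathcal D}$, $c\in\mathbb R_+^X$, $p=\mathcal A(q,c)$ and $P=\Lambda(p)$. Then for every unit flow $F\in\mathcal F_{\mathcal D}$, $$\mathbb D(F\,\|\,p)-\mathbb D(F\,\|\,q)\le\sum_{x\in X}c_x(F_x-P_x).$$
   Context: Let $X$ be a finite set. A DAG over $X$ is a finite directed acyclic graph $\mathcal D=(V,A)$ with $X\subseteq V$, a single source $r$, whose set of sinks is exactly $X$. A flow is $F\in\mathbb R_+^A$ with $\sum_{v:uv\in A}F_{uv}=\sum_{v:vu\in A}F_{vu}$ for $u\in V\setminus(X\cup\{r\})$; $F_u:=\sum_{v:uv\in A}F_{uv}$ for $u\notin X$, $F_x:=\sum_{u:ux\in A}F_{ux}$ for $x\in X$; unit flows have $F_r=1$ and form $\mathcal F_{\mathcal D}$. A marked DAG is $(\mathcal D,\omega,\theta)$ with $\omega\in\mathbb R_{>0}^A$, $\omega_{uv}>\omega_{vw}$ whenever $uv,vw\in A$, and $\theta\in\mathbb R_{>0}^A$ with $\sum_{v:uv\in A}\theta_{uv}=1$ for $u\in V\setminus X$. Put $\eta_{uv}:=1+\log(1/\theta_{uv})$, $\delta_{uv}:=\theta_{uv}/\eta_{uv}$. $\mathcal Q_{\mathcal D}:=\{p\in\mathbb R_+^A:\sum_{v:uv\in A}p_{uv}=1\ \forall u\in V\setminus X\}$; $q^{(u)}:=(q_{uv})_{v:uv\in A}$; $\mathcal Q^{(u)}$ is the probability simplex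 on $\{v:uv\in A\}$; $\mathbb D^{(u)}(p\|p'):=\frac1\kappa\sum_{v:uv\in A}\frac{\omega_{uv}}{\eta_{uv}}\big[(p_v+\delta_{uv})\log\frac{p_v+\delta_{uv}}{p'_v+\delta_{uv}}+p'_v-p_v\big]$. The step map $\mathcal A(q,c)$ outputs $p\in\mathcal Q_{\mathcal D}$: set $\hat c_x:=c_x$ for $x\in X$; process $u\in V\setminus X$ so that each vertex comes after all its out-neighbours, setting $p^{(u)}:=\arg\min_{p'\in\mathcal Q^{(u)}}\{\mathbb D^{(u)}(p'\|q^{(u)})+\sum_vp'_v\hat c_v\}$ and $\hat c_u:=\sum_vp^{(u)}_v\hat c_v$. $\Lambda(q)$ is the unique unit flow $F$ with $F_{uv}=F_uq_{uv}$ for all $uv\in A$. Global divergence: for $F\in\mathcal F_{\mathcal D}$, $q\in\mathcal Q_{\mathcal D}$, $\mathbb D(F\|q):=\frac1\kappa\sum_{uv\in A}\frac{\omega_{uv}}{\eta_{uv}}\big[(F_{uv}+F_u\delta_{uv})\log\frac{F_{uv}/F_u+\delta_{uv}}{q_{uv}+\delta_{uv}}+F_uq_{uv}-F_{uv}\big]$, with terms having $F_u=0$ interpreted as $0$. *)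

(* Defs.v *)
From HB Require Import structures.
From mathcomp Require Import all_boot all_order all_algebra.
From mathcomp Require Import reals exp.
Set Implicit Arguments. Unset Strict Implicit. Unset Printing Implicit Defensive.
Import Order.TTheory GRing.Theory Num.Theory.
Local Open Scope ring_scope.

(* A finite digraph on the finite vertex type V is given by its arc relation
   [arc]; arc-indexed vectors are functions V -> V -> R (only values on arcs
   matter). *)
Section Defs.
Context {R : realType} {V : finType}.
Variable arc : rel V.

Definition outsum (f : V -> V -> R) (u : V) : R := \sum_(v | arc u v) f u v.
Definition insum (f : V -> V -> R) (u : V) : R := \sum_(w | arc w u) f w u.

Definition node_val (X : {set V}) (f : V -> V -> R) (u : V) : R :=
  if u \in X then insum f u else outsum f u.

Definition is_DAG_over (X : {set V}) (r : V) : Prop :=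
  [/\ (forall u v, arc u v -> ~~ connect arc v u),
      (forall v, (v \in X) = ~~ [exists w, arc v w])
    & (forall v, (~~ [exists w, arc w v]) = (v == r))].

Definition is_flow (X : {set V}) (r : V) (F : V -> V -> R) : Prop :=
  (forall u v, arc u v -> 0 <= F u v) /\
  (forall u, u \notin X -> u != r -> outsum F u = insum F u).

Definition is_unit_flow (X : {set V}) (r : V) (F : V -> V -> R) : Prop :=
  is_flow X r F /\ node_val X F r = 1.

Definition is_marking (X : {set V}) (omega theta : V -> V -> R) : Prop :=
  [/\ (forall u v, arc u v -> 0 < omega u v),
      (forall u v w, arc u v -> arc v w -> omega v w < omega u v),
      (forall u v, arc u v -> 0 < theta u v)
    & (forall u, u \notin X -> outsum theta u = 1)].

Definition eta (theta : V -> V -> R) (u v : V) : R := 1 + ln (1 / theta u v).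
Definition delta (theta : V -> V -> R) (u v : V) : R := theta u v / eta theta u v.

Definition in_Q (X : {set V}) (p : V -> V -> R) : Prop :=
  (forall u v, arc u v -> 0 <= p u v) /\
  (forall u, u \notin X -> outsum p u = 1).

Definition in_simplex (u : V) (p' : V -> R) : Prop :=
  (forall v, arc u v -> 0 <= p' v) /\ \sum_(v | arc u v) p' v = 1.

Definition local_div (kappa : R) (omega theta : V -> V -> R) (u : V)
    (p' q' : V -> R) : R :=
  kappa^-1 * \sum_(v | arc u v) (omega u v / eta theta u v) *
    ((p' v + delta theta u v) *
       ln ((p' v + delta theta u v) / (q' v + delta theta u v))
     + q' v - p' v).

(* p = A(q, c): p is in Q_D, and together with the auxiliary costs chat it
   satisfies the defining equations of the step map: chat_x = c_x on X, and
   for u notin X, p^(u) is the minimiser over Q^(u) of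
   D^(u)(. || q^(u)) + sum_v p'_v chat_v, and chat_u = sum_v p_uv chat_v. *)
Definition step_output (X : {set V}) (kappa : R) (omega theta : V -> V -> R)
    (q : V -> V -> R) (c : V -> R) (p : V -> V -> R) : Prop :=
  in_Q X p /\
  exists chat : V -> R,
    [/\ (forall x, x \in X -> chat x = c x),
        (forall u, u \notin X -> chat u = \sum_(v | arc u v) p u v * chat v)
      & (forall u, u \notin X -> forall p' : V -> R, in_simplex u p' ->
           local_div kappa omega theta u (p u) (q u)
             + \sum_(v | arc u v) p u v * chat v
           <= local_div kappa omega theta u p' (q u)
             + \sum_(v | arc u v) p' v * chat v)].

Definition is_Lambda (X : {set V}) (r : V) (p P : V -> V -> R) : Prop :=
  is_unit_flow X r P /\
  (forall u v, arc u v -> P u v = node_val X P u * p u v).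

Definition global_div (X : {set V}) (kappa : R) (omega theta : V -> V -> R)
    (F q : V -> V -> R) : R :=
  kappa^-1 * \sum_(u : V) \sum_(v | arc u v)
    (if node_val X F u == 0 then 0 else
       (omega u v / eta theta u v) *
       ((F u v + node_val X F u * delta theta u v) *
          ln ((F u v / node_val X F u + delta theta u v)
              / (q u v + delta theta u v))
        + node_val X F u * q u v - F u v)).

End Defs.

(* Main.v *)
Require Import Defs.
From HB Require Import structures.
From mathcomp Require Import all_boot all_order all_algebra.
From mathcomp Require Import reals exp.
From mathcomp Require Import ring lra.
Import Order.TTheory GRing.Theory Num.Theory.
Local Open Scope ring_scope.

Section Aux.
Context {R : realType}.

Definition aa (d x y : R) : R := (x + d) * ln ((x + d) / (y + d)) + y - x.

Lemma ln_le_sub1 {y : R} : 0 < y -> ln y <= y - 1.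
Proof.
move=> y0; have := @le_ln1Dx R (y - 1); rewrite addrCA subrr addr0; apply.
by rewrite ltrBrDl subrr.
Qed.

Lemma aa_ge0 d x y : 0 < x + d -> 0 < y + d -> 0 <= aa d x y.
Proof.
move=> hx hy; rewrite /aa.
have e : ln ((x + d) / (y + d)) = - ln ((y + d) / (x + d)).
  by rewrite !ln_div ?posrE // opprB.
have h := ln_le_sub1 (divr_gt0 hy hx).
have e2 : (x + d) * ((y + d) / (x + d) - 1) = y - x.
  by field; rewrite gt_eqF.
rewrite e; have := ler_wpM2l (ltW hx) h; rewrite e2 => h2.
lra.
Qed.

Lemma aa_ident d p f q t : 0 < p + d -> 0 < f + d -> 0 < q + d ->
  0 < p + t * (f - p) + d ->
  aa d (p + t * (f - p)) q = (1 - t) * aa d p q + t * aa d f q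
    - (1 - t) * aa d p (p + t * (f - p)) - t * aa d f (p + t * (f - p)).
Proof.
move=> hp hf hq ht; rewrite /aa !ln_div ?posrE //; ring.
Qed.

Lemma aa_shift d p f t : 0 < p + d -> 0 < f + d ->
  0 < p + t * (f - p) + d ->
  aa d f p <= aa d f (p + t * (f - p)) + t * ((f - p) ^+ 2 / (p + d)).
Proof.
move=> hp hf ht; rewrite /aa !ln_div ?posrE //.
have h := ln_le_sub1 (divr_gt0 ht hp).
rewrite ln_div ?posrE // in h.
have e : (p + t * (f - p) + d) / (p + d) - 1 = t * (f - p) / (p + d).
  by field; rewrite gt_eqF.
rewrite e in h.
have := ler_wpM2l (ltW hf) h.
have e2 : (f + d) * (t * (f - p) / (p + d)) + p - (p + t * (f - p)) =
  t * ((f - p) ^+ 2 / (p + d)) by field; rewrite gt_eqF.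
lra.
Qed.

Lemma lim0 (A C K : R) : 0 <= K -> (forall t, 0 < t -> t <= 1 -> A <= C + t * K) -> A <= C.
Proof.
move=> hK h; rewrite leNgt; apply/negP => hAC.
have hD : 0 < A - C + K by lra.
have := h ((A - C) / (A - C + K)).
rewrite divr_gt0 ?subr_gt0 //= ler_pdivrMr // mul1r.
have : (A - C) / (A - C + K) * K < A - C.
  rewrite mulrAC ltr_pdivrMr // ltr_pM2l ?subr_gt0 //; lra.
move=> h1 h2; have := h2 isT; lra.
Qed.
End Aux.

Lemma local_key (R: realType) (V: finType) (S: pred V) (k: R) (w d p q f ch : V -> R) :
 0 < k ->
 (forall v, S v -> 0 < w v) -> (forall v, S v -> 0 < d v) ->
 (forall v, S v -> 0 <= p v) -> (forall v, S v -> 0 <= q v) -> (forall v, S v -> 0 <= f v) ->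
 \sum_(v | S v) p v = 1 -> \sum_(v | S v) f v = 1 ->
 (forall y : V -> R, (forall v, S v -> 0 <= y v) -> \sum_(v | S v) y v = 1 ->
   k^-1 * \sum_(v | S v) w v * aa (d v) (p v) (q v) + \sum_(v | S v) p v * ch v
   <= k^-1 * \sum_(v | S v) w v * aa (d v) (y v) (q v) + \sum_(v | S v) y v * ch v) ->
 k^-1 * \sum_(v | S v) w v * aa (d v) (f v) (p v)
   - k^-1 * \sum_(v | S v) w v * aa (d v) (f v) (q v)
 <= \sum_(v | S v) f v * ch v - \sum_(v | S v) p v * ch v.
Proof.
move=> k0 hw hd hp hq hf sp sf hmin.
have ki0 : 0 < k^-1 by rewrite invr_gt0.
have hC : 0 <= \sum_(v | S v) w v * aa (d v) (p v) (q v).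
  apply: sumr_ge0 => v Sv; apply: mulr_ge0; first exact: ltW (hw v Sv).
  apply: aa_ge0; [have := hp v Sv | have := hq v Sv]; have := hd v Sv; lra.
set K := \sum_(v | S v) w v * ((f v - p v) ^+ 2 / (p v + d v)).
have hK : 0 <= K.
  apply: sumr_ge0 => v Sv; apply: mulr_ge0; first exact: ltW (hw v Sv).
  apply: divr_ge0; first exact: sqr_ge0.
  have := hp v Sv; have := hd v Sv; lra.
suff : k^-1 * \sum_(v | S v) w v * aa (d v) (f v) (p v)
   - k^-1 * \sum_(v | S v) w v * aa (d v) (f v) (q v)
 <= \sum_(v | S v) f v * ch v - \sum_(v | S v) p v * ch v
    - k^-1 * \sum_(v | S v) w v * aa (d v) (p v) (q v).
  have := mulr_ge0 (ltW ki0) hC; lra.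
apply: (@lim0 _ _ _ (k^-1 * K)); first exact: mulr_ge0 (ltW ki0) hK.
move=> t t0 t1.
pose pt v := p v + t * (f v - p v).
have hpt : forall v, S v -> 0 <= pt v.
  move=> v Sv; rewrite /pt; have := hp v Sv; have := hf v Sv => h1 h2.
  have : 0 <= t * f v + (1 - t) * p v.
    by apply: addr_ge0; apply: mulr_ge0 => //; lra.
  lra.
have spt : \sum_(v | S v) pt v = 1.
  rewrite /pt big_split /= -mulr_sumr sumrB sp sf; lra.
have hm := hmin pt hpt spt.
have ech : \sum_(v | S v) pt v * ch v = \sum_(v | S v) p v * ch v
    + t * (\sum_(v | S v) f v * ch v - \sum_(v | S v) p v * ch v).
  rewrite -sumrB mulr_sumr -big_split /=; apply: eq_bigr => v _; rewrite /pt; ring.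
have hpw : forall v, S v ->
   w v * aa (d v) (pt v) (q v) - w v * aa (d v) (p v) (q v)
   <= t * (w v * aa (d v) (f v) (q v) - w v * aa (d v) (p v) (q v)
           - w v * aa (d v) (f v) (p v) + t * (w v * ((f v - p v) ^+ 2 / (p v + d v)))).
  move=> v Sv.
  have Pp : 0 < p v + d v by have := hp v Sv; have := hd v Sv; lra.
  have Pf : 0 < f v + d v by have := hf v Sv; have := hd v Sv; lra.
  have Pq : 0 < q v + d v by have := hq v Sv; have := hd v Sv; lra.
  have Ppt : 0 < p v + t * (f v - p v) + d v by have := hpt v Sv; rewrite /pt; have := hd v Sv; lra.
  have hid := @aa_ident _ (d v) (p v) (f v) (q v) t Pp Pf Pq Ppt.
  have hD := @aa_ge0 _ (d v) (p v) _ Pp Ppt.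
  have hE := @aa_shift _ (d v) (p v) (f v) t Pp Pf Ppt.
  rewrite /pt.
  set X1 := aa _ (p v + _) _ in hid *.
  set C1 := aa (d v) (p v) (q v) in hid *.
  set B1 := aa (d v) (f v) (q v) in hid *.
  set A1 := aa (d v) (f v) (p v) in hE *.
  set D1 := aa (d v) (p v) _ in hid hD.
  set E1 := aa (d v) (f v) (p v + _) in hid hE.
  set K1 := (f v - p v) ^+ 2 / (p v + d v) in hE *.
  have h : X1 - C1 <= t * (B1 - C1 - A1 + t * K1).
    have : 0 <= (1 - t) * D1 by apply: mulr_ge0 => //; lra.
    have : t * A1 <= t * (E1 + t * K1) by rewrite ler_pM2l.
    rewrite hid; lra.
  have hw0 := ltW (hw v Sv).
  have := ler_wpM2l hw0 h.
  have -> : w v * (X1 - C1) = w v * X1 - w v * C1 by ring.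
  have -> : w v * (t * (B1 - C1 - A1 + t * K1)) =
     t * (w v * B1 - w v * C1 - w v * A1 + t * (w v * K1)) by ring.
  done.
have hs := @ler_sum _ _ (index_enum V) S _ _ hpw.
rewrite sumrB -mulr_sumr big_split /= sumrB sumrB -mulr_sumr in hs.
rewrite ech in hm.
move: hs hm.
set SX := \sum_(v | S v) w v * aa (d v) (pt v) (q v).
set SC := \sum_(v | S v) w v * aa (d v) (p v) (q v).
set SB := \sum_(v | S v) w v * aa (d v) (f v) (q v).
set SA := \sum_(v | S v) w v * aa (d v) (f v) (p v).
set Sf := \sum_(v | S v) f v * ch v.
set Sp := \sum_(v | S v) p v * ch v.
set ki := k^-1 in ki0 *.
move=> hs hm.
have h1 : ki * (SX - SC) <= ki * (t * (SB - SC - SA + t * K)).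
  by rewrite ler_pM2l.
have h2 : 0 <= t * (ki * (SB - SC - SA + t * K) + (Sf - Sp)).
  have e1 : ki * (SX - SC) = ki * SX - ki * SC by ring.
  have e2 : t * (ki * (SB - SC - SA + t * K) + (Sf - Sp)) =
     ki * (t * (SB - SC - SA + t * K)) + t * (Sf - Sp) by ring.
  rewrite e2; lra.
rewrite pmulr_rge0 // in h2.
have e3 : ki * (SB - SC - SA + t * K) = ki * SB - ki * SC - ki * SA + t * (ki * K) by ring.
lra.
Qed.

Lemma telescope (R : realType) (V : finType) (arc : rel V) (X : {set V}) (r : V)
  (G : V -> V -> R) (g : V -> R) :
  (forall x, x \in X -> forall v, ~~ arc x v) -> (forall w, ~~ arc w r) -> r \notin X ->
  (forall u, u \notin X -> u != r -> outsum arc G u = insum arc G u) ->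
  \sum_(u | u \notin X) (\sum_(v | arc u v) G u v * g v - outsum arc G u * g u)
  = \sum_(x in X) g x * insum arc G x - g r * outsum arc G r.
Proof.
move=> noout noin rX cons.
rewrite sumrB.
have e1 : \sum_(u | u \notin X) \sum_(v | arc u v) G u v * g v
   = \sum_v g v * insum arc G v.
  rewrite [RHS](eq_bigr (fun v => \sum_u (if arc u v then G u v * g v else 0))); last first.
    move=> v _; rewrite /insum mulr_sumr big_mkcond /=; apply: eq_bigr => u _.
    by case: (arc u v); rewrite // mulrC.
  rewrite -exchange_big /= [RHS](bigID (fun u => u \in X)) /= [X in _ = X + _]big1 ?add0r; last first.
    move=> u uX; apply: big1 => v _; by rewrite (negbTE (noout u uX v)).
  by apply: eq_bigr => u _; rewrite big_mkcond.
rewrite e1 (bigID (fun v => v \in X)) /= -addrA; congr (_ + _).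
rewrite -sumrB (bigD1 r) //= big1; last first.
  move=> v /andP [vX vr]; rewrite cons //; ring.
have -> : insum arc G r = 0 by rewrite /insum big_pred0 // => w; apply/negbTE.
ring.
Qed.

Theorem lemma4p6 (R : realType) (V : finType) (arc : rel V) (X : {set V})
    (r : V) (omega theta : V -> V -> R) (kappa : R)
    (q : V -> V -> R) (c : V -> R) (p P : V -> V -> R) :
  is_DAG_over arc X r ->
  is_marking arc X omega theta ->
  0 < kappa ->
  in_Q arc X q ->
  (forall x, x \in X -> 0 <= c x) ->
  step_output arc X kappa omega theta q c p ->
  is_Lambda arc X r p P ->
  forall F : V -> V -> R, is_unit_flow arc X r F ->
    global_div arc X kappa omega theta F p - global_div arc X kappa omega theta F q
    <= \sum_(x in X) c x * (node_val arc X F x - node_val arc X P x).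
Proof.
move=> [_ sinks source] [om_pos _ th_pos th_sum] k0 [q0 q1] _
  [[p0 p1] [ch [chX chU chmin]]] [[[P0 Pcons] P1] Parc] F [[F0 Fcons] F1].
have noout : forall x, x \in X -> forall v, ~~ arc x v.
  move=> x xX v; apply/negP => a; move: xX; rewrite sinks => /negP; apply.
  by apply/existsP; exists v.
have noin : forall w, ~~ arc w r.
  move=> w; apply/negP => a; have := source r; rewrite eqxx => /negP; apply.
  by apply/existsP; exists w.
have rX : r \notin X.
  apply/negP => rX; move: F1; rewrite /node_val rX /insum big_pred0 => [|w].
    by move=> /eqP; rewrite eq_sym oner_eq0.
  exact/negbTE.
have arcU : forall u v, arc u v -> u \notin X.
  move=> u v a; apply/negP => uX; by have := noout u uX v; rewrite a.
have th1 : forall u v, arc u v -> theta u v <= 1.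
  move=> u v a; rewrite -(th_sum u (arcU u v a)) /outsum (bigD1 v) //=.
  rewrite lerDl; apply: sumr_ge0 => w /andP [aw _]; exact: ltW (th_pos u w aw).
have eta_pos : forall u v, arc u v -> 0 < Defs.eta theta u v.
  move=> u v a; rewrite /Defs.eta.
  have t0 := th_pos u v a.
  have h : 0 <= ln (1 / theta u v).
    by apply: ln_ge0; rewrite div1r invf_ge1 //; exact: th1.
  apply: (lt_le_trans ltr01); rewrite lerDl; exact: h.
have dpos : forall u v, arc u v -> 0 < delta theta u v.
  move=> u v a; rewrite /delta; apply: divr_gt0; [exact: th_pos | exact: eta_pos].
have wpos : forall u v, arc u v -> 0 < omega u v / Defs.eta theta u v.
  move=> u v a; apply: divr_gt0; [exact: om_pos | exact: eta_pos].
have step1 : global_div arc X kappa omega theta F p - global_div arc X kappa omega theta F q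
   <= \sum_(u | u \notin X) (\sum_(v | arc u v) F u v * ch v - outsum arc F u * ch u).
  rewrite /global_div -mulrBr -sumrB mulr_sumr (bigID (fun u => u \in X)) /=.
  rewrite big1 ?add0r; last first.
    move=> u uX; rewrite !big_pred0 ?subrr ?mulr0 // => v; exact/negbTE/noout.
  apply: ler_sum => u uX.
  rewrite /node_val (negbTE uX).
  set Fu := outsum arc F u.
  have Fu0 : 0 <= Fu by apply: sumr_ge0 => v a; exact: F0.
  have [Fz|Fnz] := eqVneq Fu 0.
    have Fv0 : forall v, arc u v -> F u v = 0.
      move=> v a; move/eqP: Fz; rewrite /Fu /outsum psumr_eq0 => [/allP H|w aw].
        by apply/eqP; apply: (implyP (H v (mem_index_enum v))).
      exact: F0.
    rewrite !big1_eq subrr mulr0 Fz mul0r subr0 big1 // => v a; by rewrite Fv0 // mul0r.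
  have Fp : 0 < Fu by rewrite lt_def Fnz.
  pose f v := F u v / Fu.
  have eT : forall (s : V -> V -> R),
     \sum_(v | arc u v)
       (omega u v / Defs.eta theta u v) *
       ((F u v + Fu * delta theta u v) *
          ln ((F u v / Fu + delta theta u v) / (s u v + delta theta u v))
        + Fu * s u v - F u v)
     = Fu * \sum_(v | arc u v) (omega u v / Defs.eta theta u v) *
         aa (delta theta u v) (f v) (s u v).
    move=> s; rewrite mulr_sumr; apply: eq_bigr => v a.
    rewrite /aa /f; field; rewrite Fnz /= gt_eqF //; exact: eta_pos.
  rewrite !eT.
  have hf0 : forall v, arc u v -> 0 <= f v.
    move=> v a; rewrite /f; apply: divr_ge0 => //; exact: F0.
  have hfs : \sum_(v | arc u v) f v = 1.
    by rewrite /f -mulr_suml divff.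
  have key := @local_key R V (arc u) kappa (fun v => omega u v / Defs.eta theta u v)
     (fun v => delta theta u v) (p u) (q u) f ch k0 (wpos u) (dpos u)
     (p0 u) (q0 u) hf0 (p1 u uX) hfs
     (fun y hy hs => chmin u uX y (conj hy hs)).
  have e1 : \sum_(v | arc u v) F u v * ch v = Fu * \sum_(v | arc u v) f v * ch v.
    rewrite mulr_sumr; apply: eq_bigr => v _; rewrite /f; field; exact: Fnz.
  rewrite e1 (chU u uX).
  have := ler_wpM2l Fu0 key.
  set A := \sum_(v | arc u v) _ * aa _ (f v) (p u v).
  set B := \sum_(v | arc u v) _ * aa _ (f v) (q u v).
  move=> h; rewrite -[X in _ <= X - _]/(Fu * _).
  have -> : kappa^-1 * (Fu * A - Fu * B) = Fu * (kappa^-1 * A - kappa^-1 * B) by ring.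
  by rewrite -[X in _ <= X]mulrBr.
have tF := @telescope R V arc X r F ch noout noin rX Fcons.
have tP := @telescope R V arc X r P ch noout noin rX Pcons.
have P0sum : \sum_(u | u \notin X)
   (\sum_(v | arc u v) P u v * ch v - outsum arc P u * ch u) = 0.
  apply: big1 => u uX.
  rewrite (chU u uX) mulr_sumr.
  have -> : outsum arc P u = node_val arc X P u by rewrite /node_val (negbTE uX).
  apply/eqP; rewrite subr_eq0; apply/eqP; apply: eq_bigr => v a; rewrite Parc //; ring.
have oF : outsum arc F r = 1 by move: F1; rewrite /node_val (negbTE rX).
have oP : outsum arc P r = 1 by move: P1; rewrite /node_val (negbTE rX).
rewrite tF oF in step1; rewrite P0sum oP in tP.
have -> : \sum_(x in X) c x * (node_val arc X F x - node_val arc X P x)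
  = \sum_(x in X) ch x * insum arc F x - \sum_(x in X) ch x * insum arc P x.
  rewrite -sumrB; apply: eq_bigr => x xX; rewrite /node_val xX chX //; ring.
lra.
Qed.
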